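(* The function $\sigma$ satisfies $$\lim_{T\to0^+}\sigma(T)=+\infty\qquad\text{and}\qquad\lim_{T\to+\infty}\sigma(T)=-\infty,$$ where $\sigma(T)=c'(1)+\phi_1''(1)$ and $c=c_T$ is the continuous solution on $[0,1]$ of $$c''+(n-1)\frac{C_k(r)}{S_k(r)}c'+\Big[\lambda_1-\Big(\frac{2\pi}{T}\Big)^2\Big]c=0,\qquad c(1)=-\phi_1'(1).$$
   Context: Let $n\ge 2$ and $k\in\{1,-1\}$; $S_k=\sin,\ C_k=\cos$ if $k=1$ and $S_k=\sinh,\ C_k=\cosh$ if $k=-1$ (so that $dr^2+S_k(r)^2d\theta^2$ is the metric of $\mathbb{S}^n$, resp. $\mathbb{H}^n$, in geodesic polar coordinates). $\lambda_1$ is the smallest positive number for which the ODE $u''+(n-1)\frac{C_k(r)}{S_k(r)}u'+\lambda_1u=0$ has a solution $\phi_1$ bounded at $r=0$, positive on $[0,1)$ and vanishing at $r=1$ (the first Dirichlet eigenvalue of the unit geodesic ball); $\phi_1$ is such a solution, normalized so that the function $(x,t)\mapsto\phi_1(\|x\|)$ has $L^2$ norm $1$ on $B_1\times[0,2\pi]$. $\sigma(T)$ coincides with the eigenvalue of the linearized operator $H_T$ on $\cos t$. *)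

(* Defs.v *)
From Stdlib Require Import Reals ZArith.
Open Scope R_scope.

Definition Sk (k : Z) (r : R) : R := if Z.eqb k 1%Z then sin r else sinh r.
Definition Ck (k : Z) (r : R) : R := if Z.eqb k 1%Z then cos r else cosh r.

(* Area of the unit m-sphere S^m in R^(m+1): |S^0| = 2, |S^1| = 2 pi,
   |S^(m+2)| = 2 pi / (m+1) * |S^m|. *)
Fixpoint sphere_area (m : nat) : R :=
  match m with
  | O => 2
  | S O => 2 * PI
  | S (S p as q) => 2 * PI / INR q * sphere_area p
  end.

Definition radial_ode (n : nat) (k : Z) (mu : R) (u u1 u2 : R -> R) (r : R) : Prop :=
  u2 r + (INR n - 1) * (Ck k r / Sk k r) * u1 r + mu * u r = 0.

Definition twice_diff_on (u u1 u2 : R -> R) : Prop :=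
  forall r, 0 < r <= 1 -> derivable_pt_lim u r (u1 r) /\ derivable_pt_lim u1 r (u2 r).

Definition right_cont_at_0 (u : R -> R) : Prop :=
  forall eps, 0 < eps -> exists d, 0 < d /\ forall r, 0 < r < d -> Rabs (u r - u 0) < eps.

Definition dir_eigfun (n : nat) (k : Z) (mu : R) (u u1 u2 : R -> R) : Prop :=
  twice_diff_on u u1 u2 /\
  (forall r, 0 < r < 1 -> radial_ode n k mu u u1 u2 r) /\
  right_cont_at_0 u /\
  (exists B, forall r, 0 < r <= 1 -> Rabs (u r) <= B) /\
  (forall r, 0 <= r < 1 -> 0 < u r) /\
  u 1 = 0.

Definition first_dir_eig (n : nat) (k : Z) (lam : R) : Prop :=
  0 < lam /\
  (exists u u1 u2, dir_eigfun n k lam u u1 u2) /\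
  (forall mu, 0 < mu < lam -> ~ exists u u1 u2, dir_eigfun n k mu u u1 u2).

(* ||(x,t) |-> phi(|x|)||_{L^2(B_1 x [0,2pi])} = 1, in geodesic polar coordinates:
   2 pi * |S^(n-1)| * int_0^1 phi(r)^2 S_k(r)^(n-1) dr = 1. *)
Definition L2_normalized (n : nat) (k : Z) (phi : R -> R) : Prop :=
  exists pr : Riemann_integrable (fun r => (phi r) ^ 2 * (Sk k r) ^ (n - 1)) 0 1,
    2 * PI * sphere_area (n - 1) * RiemannInt pr = 1.

Definition c_sol (n : nat) (k : Z) (lam : R) (phi_1 : R -> R) (T : R)
    (c c1 c2 : R -> R) : Prop :=
  twice_diff_on c c1 c2 /\
  (forall r, 0 < r < 1 -> radial_ode n k (lam - (2 * PI / T) ^ 2) c c1 c2 r) /\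
  right_cont_at_0 c /\
  c 1 = - phi_1 1.

(* Main.v *)
Require Import Defs.
From Stdlib Require Import Reals ZArith Lra Lia Psatz.
From Coquelicot Require Import Coquelicot.
Open Scope R_scope.

Lemma dpl_eq f x l l' : derivable_pt_lim f x l -> l = l' -> derivable_pt_lim f x l'.
Proof. intros H ->; exact H. Qed.

Lemma mvt_le (f f' : R -> R) a b : a <= b ->
  (forall c, a <= c <= b -> derivable_pt_lim f c (f' c)) ->
  (forall c, a < c < b -> 0 <= f' c) -> f a <= f b.
Proof.
  intros Hab Hd Hs. destruct (Rle_lt_or_eq_dec _ _ Hab) as [H|H]; [|subst; lra].
  destruct (MVT_cor2 f f' a b H Hd) as [c [E Hc]].
  specialize (Hs c Hc). nra.
Qed.

Lemma mvt_lt (f f' : R -> R) a b : a < b ->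
  (forall c, a <= c <= b -> derivable_pt_lim f c (f' c)) ->
  (forall c, a < c < b -> 0 < f' c) -> f a < f b.
Proof.
  intros H Hd Hs.
  destruct (MVT_cor2 f f' a b H Hd) as [c [E Hc]].
  specialize (Hs c Hc). nra.
Qed.

Lemma mvt_bound (f f' : R -> R) a b K : a <= b ->
  (forall c, a <= c <= b -> derivable_pt_lim f c (f' c)) ->
  (forall c, a < c < b -> Rabs (f' c) <= K) -> Rabs (f b - f a) <= K * (b - a).
Proof.
  intros Hab Hd Hs. destruct (Rle_lt_or_eq_dec _ _ Hab) as [H|H].
  - destruct (MVT_cor2 f f' a b H Hd) as [c [E Hc]].
    specialize (Hs c Hc). rewrite E, Rabs_mult, (Rabs_right (b-a)) by lra.
    apply Rmult_le_compat_r; lra.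
  - subst. replace (f b - f b) with 0 by ring. rewrite Rabs_R0.
    replace (b-b) with 0 by ring. lra.
Qed.

Definition lim0 (f : R -> R) := forall eps, 0 < eps -> exists d, 0 < d /\ forall r, 0 < r < d -> Rabs (f r) < eps.

Lemma lim0_nonneg f x : lim0 f -> 0 < x -> (forall r, 0 < r < x -> f r <= f x) -> 0 <= f x.
Proof.
  intros Hl Hx Hm. destruct (Rle_or_lt 0 (f x)) as [H|H]; auto.
  destruct (Hl (- f x)) as [d [Hd Hr]]; [lra|].
  set (r := Rmin (d/2) (x/2)).
  assert (0 < r < d /\ r < x) by (unfold r; split; [split|]; [apply Rmin_glb_lt|apply (Rle_lt_trans _ (d/2)); [apply Rmin_l|]|apply (Rle_lt_trans _ (x/2)); [apply Rmin_r|]]; lra).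
  specialize (Hr r ltac:(lra)). specialize (Hm r ltac:(lra)).
  apply Rabs_def2 in Hr. lra.
Qed.

Lemma lim0_nonpos f x : lim0 f -> 0 < x -> (forall r, 0 < r < x -> f x <= f r) -> f x <= 0.
Proof.
  intros Hl Hx Hm. assert (0 <= - f x); [|lra].
  apply (lim0_nonneg (fun r => - f r)); auto.
  - intros e He. destruct (Hl e He) as [d [Hd Hr]]. exists d; split; auto.
    intros r Hr'. rewrite Rabs_Ropp. auto.
  - intros r Hr. specialize (Hm r Hr). lra.
Qed.

Lemma dmult f g x a b : derivable_pt_lim f x a -> derivable_pt_lim g x b ->
  derivable_pt_lim (fun y => f y * g y) x (a * g x + f x * b).
Proof. intros. apply (dpl_eq _ _ (a * g x + f x * b)); [|ring]. apply (derivable_pt_lim_mult f g); auto. Qed.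

Lemma dminus f g x a b : derivable_pt_lim f x a -> derivable_pt_lim g x b ->
  derivable_pt_lim (fun y => f y - g y) x (a - b).
Proof. intros. apply (derivable_pt_lim_minus f g); auto. Qed.

Lemma dplus f g x a b : derivable_pt_lim f x a -> derivable_pt_lim g x b ->
  derivable_pt_lim (fun y => f y + g y) x (a + b).
Proof. intros. apply (derivable_pt_lim_plus f g); auto. Qed.

Lemma Rabs_def2b x y : Rabs x <= y -> - y <= x <= y.
Proof. unfold Rabs. destruct (Rcase_abs x); intros; lra. Qed.

Lemma cont_eps f x0 : continuity_pt f x0 -> forall eps, 0 < eps ->
  exists alp, 0 < alp /\ forall x, Rabs (x - x0) < alp -> Rabs (f x - f x0) < eps.
Proof.
  intros H eps He. destruct (H eps He) as [alp [Ha Hx]]. exists alp; split; auto.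
  intros x Hxa. destruct (Req_dec x x0) as [->|Hne].
  - replace (f x0 - f x0) with 0 by ring. rewrite Rabs_R0; auto.
  - apply (Hx x). split; [split; [exact I| auto]|]. exact Hxa.
Qed.

Lemma first_zero f b : 0 < b -> (forall x, 0 < x <= b -> continuity_pt f x) ->
  right_cont_at_0 f -> 0 < f 0 -> (exists x, 0 < x <= b /\ f x <= 0) ->
  exists z, 0 < z <= b /\ f z = 0 /\ forall t, 0 <= t < z -> 0 < f t.
Proof.
  intros Hb Hc Hr H0 [x0 [Hx0 Hfx0]].
  set (E := fun x => 0 <= x /\ forall t, 0 <= t <= x -> 0 < f t).
  assert (Hub : bound E).
  { exists x0. intros y [Hy Hy']. destruct (Rle_or_lt y x0) as [|Hlt]; auto.
    specialize (Hy' x0 ltac:(lra)). lra. }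
  assert (HE0 : exists x, E x).
  { exists 0. split; [lra|]. intros t Ht. replace t with 0 by lra. auto. }
  destruct (completeness E Hub HE0) as [z [Hz1 Hz2]].
  assert (Hzx0 : z <= x0).
  { apply Hz2. intros y [Hy Hy']. destruct (Rle_or_lt y x0) as [|Hlt]; auto.
    specialize (Hy' x0 ltac:(lra)). lra. }
  assert (Hbelow : forall t, 0 <= t < z -> 0 < f t).
  { intros t Ht. destruct (Rlt_or_le 0 (f t)) as [|Hft]; auto. exfalso.
    assert (z <= t); [|lra]. apply Hz2. intros y [Hy Hy'].
    destruct (Rle_or_lt y t) as [|Hlt]; auto. specialize (Hy' t ltac:(lra)). lra. }
  assert (Hzpos : 0 < z).
  { destruct (Hr (f 0) H0) as [d [Hd Hd']].
    assert (d / 2 <= z); [|lra]. apply Hz1. split; [lra|].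
    intros t Ht. destruct (Req_dec t 0) as [->|]; auto.
    specialize (Hd' t ltac:(lra)). apply Rabs_def2 in Hd'. lra. }
  exists z. split; [lra|]. split; auto.
  destruct (Rtotal_order (f z) 0) as [Hn|[Hz|Hp]]; auto; exfalso.
  - destruct (cont_eps f z (Hc z ltac:(lra)) (- f z) ltac:(lra)) as [a [Ha Ha']].
    set (t := Rmax 0 (z - a / 2)).
    assert (0 <= t /\ t < z /\ z - a / 2 <= t) by (unfold t; split; [apply Rmax_l|split; [apply Rmax_lub_lt; lra|apply Rmax_r]]).
    specialize (Hbelow t ltac:(lra)).
    assert (Rabs (t - z) < a) by (apply Rabs_def1; lra).
    specialize (Ha' t H1). apply Rabs_def2 in Ha'. lra.
  - destruct (cont_eps f z (Hc z ltac:(lra)) (f z) Hp) as [a [Ha Ha']].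
    assert (z + a / 2 <= z); [|lra]. apply Hz1. split; [lra|].
    intros t Ht. destruct (Rlt_or_le t z) as [Hlt|Hge].
    + apply Hbelow; lra.
    + assert (Rabs (t - z) < a) by (apply Rabs_def1; lra).
      specialize (Ha' t H). apply Rabs_def2 in Ha'. lra.
Qed.

Lemma deriv_nonpos_at_zero f l z : 0 < z -> derivable_pt_lim f z l -> f z = 0 ->
  (forall t, 0 <= t < z -> 0 < f t) -> l <= 0.
Proof.
  intros Hz Hd Hfz Hpos. destruct (Rle_or_lt l 0) as [|Hl]; auto. exfalso.
  destruct (Hd l Hl) as [d Hd'].
  set (h := - Rmin (d / 2) (z / 2)).
  assert (Hh : 0 < - h /\ - h < d /\ - h <= z / 2).
  { unfold h. rewrite Ropp_involutive. pose proof (cond_pos d).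
    split; [apply Rmin_glb_lt; lra|]. split.
    - apply (Rle_lt_trans _ (d/2)); [apply Rmin_l|lra].
    - apply Rmin_r. }
  assert (Hne : h <> 0) by lra.
  assert (Ha : Rabs h < d) by (rewrite Rabs_left by lra; lra).
  specialize (Hd' h Hne Ha). rewrite Hfz in Hd'.
  specialize (Hpos (z + h) ltac:(lra)).
  apply Rabs_def2 in Hd'. destruct Hd' as [_ Hd'].
  assert (Hq : (f (z + h) - 0) / h < 0).
  { unfold Rdiv. replace (f (z + h) - 0) with (f (z + h)) by ring.
    apply Rmult_pos_neg; [lra| apply Rinv_lt_0_compat; lra]. }
  lra.
Qed.

Lemma ddiv f g x a b : derivable_pt_lim f x a -> derivable_pt_lim g x b -> g x <> 0 ->
  derivable_pt_lim (fun y => f y / g y) x ((a * g x - b * f x) / (g x) ^ 2).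
Proof.
  intros. apply (dpl_eq _ _ ((a * g x - b * f x) / Rsqr (g x))).
  apply (derivable_pt_lim_div f g); auto. unfold Rsqr; simpl; field; auto.
Qed.

Lemma dcomp f g x a b : derivable_pt_lim f x a -> derivable_pt_lim g (f x) b ->
  derivable_pt_lim (fun y => g (f y)) x (b * a).
Proof. intros. apply (derivable_pt_lim_comp f g); auto. Qed.

Lemma cont_right0 f : continuity_pt f 0 -> right_cont_at_0 f.
Proof.
  intros H eps He. destruct (cont_eps f 0 H eps He) as [a [Ha Ha']].
  exists a; split; auto. intros r Hr. apply Ha'. rewrite Rminus_0_r, Rabs_right; lra.
Qed.

Lemma lim0_comb f g a : lim0 f -> lim0 g -> lim0 (fun x => f x + a * g x).
Proof.
  intros Hf Hg eps He.
  assert (Ha : 0 < Rabs a + 1) by (pose proof (Rabs_pos a); lra).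
  destruct (Hf (eps / 2)) as [d1 [Hd1 H1]]; [lra|].
  destruct (Hg (eps / (2 * (Rabs a + 1)))) as [d2 [Hd2 H2]]; [apply Rdiv_lt_0_compat; lra|].
  exists (Rmin d1 d2). split; [apply Rmin_glb_lt; lra|].
  intros r Hr. assert (r < d1) by (apply (Rlt_le_trans _ _ _ (proj2 Hr)), Rmin_l).
  assert (r < d2) by (apply (Rlt_le_trans _ _ _ (proj2 Hr)), Rmin_r).
  specialize (H1 r ltac:(lra)). specialize (H2 r ltac:(lra)).
  apply (Rle_lt_trans _ _ _ (Rabs_triang _ _)). rewrite Rabs_mult.
  assert (Hab : Rabs a * Rabs (g r) <= (Rabs a + 1) * (eps / (2 * (Rabs a + 1)))).
  { apply Rmult_le_compat; try apply Rabs_pos; lra. }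
  replace ((Rabs a + 1) * (eps / (2 * (Rabs a + 1)))) with (eps / 2) in Hab by (field; lra).
  lra.
Qed.

Definition Yk (k : Z) (r : R) : R := if Z.eqb k 1 then 1 - cos r else cosh r - 1.

Lemma exp_opp_mul x : exp x * exp (- x) = 1.
Proof. rewrite <- exp_plus. replace (x + - x) with 0 by ring. apply exp_0. Qed.

Section SK.
Variable k : Z.
Hypothesis kk : k = 1%Z \/ k = (-1)%Z.

Lemma dS r : derivable_pt_lim (Sk k) r (Ck k r).
Proof.
  destruct kk as [-> | ->]; unfold Sk, Ck; simpl.
  - apply derivable_pt_lim_sin.
  - apply derivable_pt_lim_sinh.
Qed.

Lemma dY r : derivable_pt_lim (Yk k) r (Sk k r).
Proof.
  destruct kk as [-> | ->]; unfold Sk, Yk; simpl.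
  - apply (dpl_eq _ _ (0 - - sin r)); [|ring].
    apply derivable_pt_lim_minus; [apply derivable_pt_lim_const|apply derivable_pt_lim_cos].
  - apply (dpl_eq _ _ (sinh r - 0)); [|ring].
    apply derivable_pt_lim_minus; [apply derivable_pt_lim_cosh|apply derivable_pt_lim_const].
Qed.

Lemma S0 : Sk k 0 = 0.
Proof.
  destruct kk as [-> | ->]; unfold Sk; simpl. apply sin_0.
  unfold sinh. rewrite Ropp_0, exp_0. field.
Qed.

Lemma Y0 : Yk k 0 = 0.
Proof.
  destruct kk as [-> | ->]; unfold Yk; simpl. rewrite cos_0; ring.
  unfold cosh. rewrite Ropp_0, exp_0. field.
Qed.

Lemma Spos r : 0 < r <= 1 -> 0 < Sk k r.
Proof.
  intros Hr. pose proof PI2_1.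
  destruct kk as [-> | ->]; unfold Sk; simpl.
  - apply sin_gt_0; lra.
  - unfold sinh. assert (exp (-r) < exp r) by (apply exp_increasing; lra). lra.
Qed.

Lemma cosh_le2 r : 0 <= r <= 1 -> cosh r <= 2.
Proof.
  intros Hr. unfold cosh. pose proof exp_le_3.
  assert (exp r <= exp 1) by (destruct (Req_dec r 1); [subst; lra| left; apply exp_increasing; lra]).
  assert (exp (-r) <= 1) by (rewrite <- exp_0; destruct (Req_dec r 0); [subst; rewrite Ropp_0; lra| left; apply exp_increasing; lra]).
  lra.
Qed.

Lemma Cbnd r : 0 <= r <= 1 -> 0 < Ck k r <= 2.
Proof.
  intros Hr. pose proof PI2_1.
  destruct kk as [-> | ->]; unfold Ck; simpl.
  - split; [apply cos_gt_0; lra|]. pose proof (COS_bound r). lra.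
  - split; [|apply cosh_le2; auto]. unfold cosh.
    pose proof (exp_pos r); pose proof (exp_pos (-r)); lra.
Qed.

Lemma S2 r : Sk k r ^ 2 = Yk k r * (2 - IZR k * Yk k r).
Proof.
  destruct kk as [-> | ->]; unfold Sk, Yk; simpl.
  - pose proof (sin2_cos2 r). unfold Rsqr in *. nra.
  - unfold sinh, cosh. pose proof (exp_opp_mul r). nra.
Qed.

Lemma CY r : Ck k r = 1 - IZR k * Yk k r.
Proof. destruct kk as [-> | ->]; unfold Ck, Yk; simpl; ring. Qed.

Lemma Ybnd r : 0 <= r <= 1 -> Rabs (Yk k r) <= 1.
Proof.
  intros Hr. pose proof (Cbnd r Hr) as Hc. pose proof PI2_1.
  destruct kk as [-> | ->]; unfold Ck, Yk in *; simpl in *.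
  - pose proof (COS_bound r). apply Rabs_le; lra.
  - apply Rabs_le; lra.
Qed.

Lemma S_le r : 0 <= r <= 1 -> Sk k r <= 2 * r.
Proof.
  intros Hr.
  assert (H : - (Sk k 0 - 2 * 0) <= - (Sk k r - 2 * r)).
  { apply (mvt_le (fun x => - (Sk k x - 2 * x)) (fun x => - (Ck k x - 2))); [lra| |].
    - intros c Hc. apply derivable_pt_lim_opp. apply (dpl_eq _ _ (Ck k c - 2 * 1)); [|ring].
      apply derivable_pt_lim_minus; [apply dS|].
      apply derivable_pt_lim_scal, derivable_pt_lim_id.
    - intros c Hc. pose proof (Cbnd c ltac:(lra)). lra. }
  rewrite S0 in H. lra.
Qed.

Lemma S_mono r s : 0 <= r <= s -> s <= 1 -> Sk k r <= Sk k s.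
Proof.
  intros H1 H2. apply (mvt_le _ (Ck k)); [lra| |].
  - intros c _. apply dS.
  - intros c Hc. pose proof (Cbnd c ltac:(lra)). lra.
Qed.
End SK.

Section SOL.
Variable n : nat.
Variable k : Z.
Variable m : nat.
Hypothesis kk : k = 1%Z \/ k = (-1)%Z.
Hypothesis Hm1 : (1 <= m)%nat.
Hypothesis Hnm : INR n - 1 = INR m.

Definition w r := Sk k r ^ m.
Definition dw r := INR m * Sk k r ^ pred m * Ck k r.

Lemma dw_lim r : derivable_pt_lim w r (dw r).
Proof.
  unfold w, dw. apply (dpl_eq _ _ (INR m * Sk k r ^ pred m * Ck k r)); [|ring].
  apply (derivable_pt_lim_comp (Sk k) (fun y => y ^ m)).
  - apply dS; auto.
  - apply derivable_pt_lim_pow.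
Qed.

Lemma w_split r : w r = Sk k r ^ pred m * Sk k r.
Proof. unfold w. destruct m as [|p]; [lia|]. simpl. ring. Qed.

Lemma w_pos r : 0 < r <= 1 -> 0 < w r.
Proof. intros H. unfold w. apply pow_lt, Spos; auto. Qed.

Lemma w_nonneg r : 0 <= r <= 1 -> 0 <= w r.
Proof.
  intros H. destruct (Req_dec r 0) as [->|]. unfold w. rewrite S0 by auto.
  destruct m; [lia|]. simpl; lra. left; apply w_pos; lra.
Qed.

Lemma w_le r : 0 <= r <= 1 -> w r <= 2 ^ m * r.
Proof.
  intros H. rewrite w_split. destruct m as [|p]; [lia|]. simpl pred.
  pose proof (S_le k kk r H) as H1.
  assert (0 <= Sk k r) by (destruct (Req_dec r 0) as [->|]; [rewrite S0 by auto; lra| left; apply Spos; auto; lra]).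
  assert (Sk k r ^ p <= 2 ^ p) by (apply pow_incr; lra).
  simpl. assert (0 <= Sk k r ^ p) by (apply pow_le; lra). nra.
Qed.

Lemma w_le2 r : 0 <= r <= 1 -> w r <= 2 ^ m.
Proof. intros H. pose proof (w_le r H). assert (0 < 2 ^ m) by (apply pow_lt; lra). nra. Qed.

Lemma w_mono r s : 0 <= r <= s -> s <= 1 -> w r <= w s.
Proof.
  intros H1 H2. unfold w. apply pow_incr. split.
  - destruct (Req_dec r 0) as [->|]; [rewrite S0 by auto; lra| left; apply Spos; auto; lra].
  - apply S_mono; auto.
Qed.

Definition sol mu (v v1 v2 : R -> R) :=
  twice_diff_on v v1 v2 /\ (forall r, 0 < r < 1 -> radial_ode n k mu v v1 v2 r) /\ right_cont_at_0 v.

Lemma sol_opp mu v v1 v2 : sol mu v v1 v2 -> sol mu (fun x => - v x) (fun x => - v1 x) (fun x => - v2 x).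
Proof.
  intros [H1 [H2 H3]]. split; [|split].
  - intros r Hr. destruct (H1 r Hr). split; apply derivable_pt_lim_opp; auto.
  - intros r Hr. specialize (H2 r Hr). unfold radial_ode in *. lra.
  - intros e He. destruct (H3 e He) as [d [Hd Hr]]. exists d; split; auto.
    intros r H. replace (- v r - - v 0) with (- (v r - v 0)) by ring. rewrite Rabs_Ropp; auto.
Qed.

Lemma sol_scal mu v v1 v2 a : sol mu v v1 v2 -> sol mu (fun x => a * v x) (fun x => a * v1 x) (fun x => a * v2 x).
Proof.
  intros [H1 [H2 H3]]. split; [|split].
  - intros r Hr. destruct (H1 r Hr). split; apply derivable_pt_lim_scal; auto.
  - intros r Hr. specialize (H2 r Hr). unfold radial_ode in *.
    replace (a * v2 r + (INR n - 1) * (Ck k r / Sk k r) * (a * v1 r) + mu * (a * v r))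
      with (a * (v2 r + (INR n - 1) * (Ck k r / Sk k r) * v1 r + mu * v r)) by ring.
    rewrite H2; ring.
  - intros e He. destruct (Req_dec a 0) as [->|Ha].
    + exists 1; split; [lra|]. intros r _. replace (0 * v r - 0 * v 0) with 0 by ring. rewrite Rabs_R0; auto.
    + destruct (H3 (e / Rabs a)) as [d [Hd Hr]]. apply Rdiv_lt_0_compat; auto. apply Rabs_pos_lt; auto.
      exists d; split; auto. intros r H. specialize (Hr r H).
      replace (a * v r - a * v 0) with (a * (v r - v 0)) by ring. rewrite Rabs_mult.
      assert (0 < Rabs a) by (apply Rabs_pos_lt; auto).
      apply (Rmult_lt_compat_l (Rabs a)) in Hr; auto. replace (Rabs a * (e / Rabs a)) with e in Hr by (field; lra). auto.
Qed.

Lemma dir_sol lam u u1 u2 : dir_eigfun n k lam u u1 u2 -> sol lam u u1 u2.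
Proof. intros [H1 [H2 [H3 _]]]. split; auto. Qed.

Lemma Q_d mu v v1 v2 r : sol mu v v1 v2 -> 0 < r <= 1 ->
  derivable_pt_lim (fun x => w x * v1 x) r (dw r * v1 r + w r * v2 r).
Proof.
  intros [H1 _] Hr. apply (dmult w v1); [apply dw_lim|]. apply (H1 r Hr).
Qed.

Lemma Q_ode mu v v1 v2 r : sol mu v v1 v2 -> 0 < r < 1 ->
  dw r * v1 r + w r * v2 r = - mu * w r * v r.
Proof.
  intros [_ [H2 _]] Hr. specialize (H2 r Hr). unfold radial_ode in H2. rewrite Hnm in H2.
  assert (0 < Sk k r) by (apply Spos; auto; lra).
  assert (E : v2 r = - (INR m * (Ck k r / Sk k r) * v1 r + mu * v r)) by lra.
  rewrite E, w_split. unfold dw. field. lra.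
Qed.

Definition Pw (v v1 u u1 : R -> R) r := w r * (v1 r * u r - v r * u1 r).
Definition dPw (v v1 v2 u u1 u2 : R -> R) r :=
  dw r * (v1 r * u r - v r * u1 r) + w r * (v2 r * u r - v r * u2 r).

Lemma P_d mu1 mu2 v v1 v2 u u1 u2 r : sol mu1 v v1 v2 -> sol mu2 u u1 u2 -> 0 < r <= 1 ->
  derivable_pt_lim (Pw v v1 u u1) r (dPw v v1 v2 u u1 u2 r).
Proof.
  intros [H1 _] [H1' _] Hr. destruct (H1 r Hr) as [A1 A2]. destruct (H1' r Hr) as [B1 B2].
  unfold Pw, dPw.
  apply (dpl_eq _ _ (dw r * (v1 r * u r - v r * u1 r) + w r * ((v2 r * u r + v1 r * u1 r) - (v1 r * u1 r + v r * u2 r)))); [|ring].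
  apply (dmult w (fun y => v1 y * u y - v y * u1 y)); [apply dw_lim|].
  apply (dminus (fun y => v1 y * u y) (fun y => v y * u1 y)).
  apply (dmult v1 u); auto. apply (dmult v u1); auto.
Qed.

Lemma P_ode mu1 mu2 v v1 v2 u u1 u2 r : sol mu1 v v1 v2 -> sol mu2 u u1 u2 -> 0 < r < 1 ->
  dPw v v1 v2 u u1 u2 r = (mu2 - mu1) * w r * v r * u r.
Proof.
  intros [_ [H2 _]] [_ [H2' _]] Hr. specialize (H2 r Hr). specialize (H2' r Hr).
  unfold radial_ode in *. rewrite Hnm in *.
  assert (0 < Sk k r) by (apply Spos; auto; lra).
  assert (E : v2 r = - (INR m * (Ck k r / Sk k r) * v1 r + mu1 * v r)) by lra.
  assert (E' : u2 r = - (INR m * (Ck k r / Sk k r) * u1 r + mu2 * u r)) by lra.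
  unfold dPw, dw. rewrite E, E', w_split. field. lra.
Qed.

Lemma bnd0 v : right_cont_at_0 v -> exists d, 0 < d <= 1 /\ forall r, 0 < r < d -> Rabs (v r) <= Rabs (v 0) + 1.
Proof.
  intros H. destruct (H 1 ltac:(lra)) as [d [Hd Hr]]. exists (Rmin d 1). split.
  - split; [apply Rmin_glb_lt; lra| apply Rmin_r].
  - intros r Hr'. assert (r < d) by (apply (Rlt_le_trans _ _ _ (proj2 Hr')), Rmin_l).
    specialize (Hr r ltac:(lra)). pose proof (Rabs_triang_inv (v r) (v 0)). lra.
Qed.
End SOL.

Section SOL2.
Variable n : nat.
Variable k : Z.
Variable m : nat.
Hypothesis kk : k = 1%Z \/ k = (-1)%Z.
Hypothesis Hm1 : (1 <= m)%nat.
Hypothesis Hnm : INR n - 1 = INR m.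

Notation w := (w k m).
Notation dw := (dw k m).
Notation sol := (sol n k).

Lemma Q0_aux mu v v1 v2 : sol mu v v1 v2 -> forall eps, 0 < eps ->
  exists d, 0 < d /\ forall r, 0 < r < d -> w r * v1 r < eps.
Proof.
  intros Hs eps He. pose proof Hs as [Hs1 [Hs2 Hs3]].
  destruct (bnd0 v Hs3) as [d0 [Hd0 Hb]].
  set (V := Rabs (v 0) + 1).
  assert (HV : 1 <= V) by (unfold V; pose proof (Rabs_pos (v 0)); lra).
  assert (H2m : 0 < 2 ^ m) by (apply pow_lt; lra).
  set (K := Rabs mu * 2 ^ m * V + 1).
  assert (HK : 1 <= K) by (unfold K; pose proof (Rabs_pos mu); assert (0 <= Rabs mu * 2 ^ m * V) by (repeat apply Rmult_le_pos; lra); lra).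
  exists (Rmin d0 (eps / (2 * K))). split.
  { apply Rmin_glb_lt; [lra|]. apply Rdiv_lt_0_compat; lra. }
  intros r Hr. destruct (Rlt_or_le (w r * v1 r) eps) as [|Hge]; auto. exfalso.
  assert (Hrd0 : r < d0) by (apply (Rlt_le_trans _ _ _ (proj2 Hr)), Rmin_l).
  assert (HrK : r * K < eps / 2).
  { assert (r < eps / (2 * K)) by (apply (Rlt_le_trans _ _ _ (proj2 Hr)), Rmin_r).
    apply (Rmult_lt_compat_r K) in H; [|lra]. replace (eps / (2 * K) * K) with (eps/2) in H by (field; lra). lra. }
  assert (HQ : forall s, 0 < s <= r -> eps / 2 <= w s * v1 s).
  { intros s Hs0.
    pose proof (mvt_bound (fun x => w x * v1 x) (fun x => dw x * v1 x + w x * v2 x) s r K (proj2 Hs0)) as HB.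
    assert (Rabs (w r * v1 r - w s * v1 s) <= K * (r - s)).
    { apply HB.
      - intros c Hc. eapply Q_d; eauto; lra.
      - intros c Hc. rewrite (Q_ode n k m kk Hm1 Hnm mu v v1 v2) by (auto; lra).
        rewrite !Rabs_mult, Rabs_Ropp.
        assert (0 <= w c <= 2 ^ m) by (split; [eapply w_nonneg|eapply w_le2]; eauto; lra).
        rewrite (Rabs_right (w c)) by lra.
        assert (Rabs (v c) <= V) by (apply Hb; lra).
        pose proof (Rabs_pos mu); pose proof (Rabs_pos (v c)).
        unfold K. assert (Rabs mu * w c * Rabs (v c) <= Rabs mu * 2 ^ m * V) by (apply Rmult_le_compat; [apply Rmult_le_pos; lra | lra | apply Rmult_le_compat_l; lra | lra]). lra. }
    apply Rabs_def2b in H. nra. }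
  set (A := eps / (2 * 2 ^ m)).
  assert (HA : 0 < A) by (unfold A; apply Rdiv_lt_0_compat; lra).
  assert (Hv1 : forall s, 0 < s <= r -> A / s <= v1 s).
  { intros s Hs0. specialize (HQ s Hs0).
    assert (0 < w s) by (eapply w_pos; eauto; lra).
    assert (w s <= 2 ^ m * s) by (eapply w_le; eauto; lra).
    assert (0 < v1 s) by nra.
    unfold A. apply (Rmult_le_reg_r (2 * 2 ^ m * s)); [nra|].
    replace (eps / (2 * 2 ^ m) / s * (2 * 2 ^ m * s)) with eps by (field; lra). nra. }
  set (s := r * exp (- ((2 * V + 1) / A))).
  assert (Hs0 : 0 < s < r).
  { unfold s. pose proof (exp_pos (- ((2 * V + 1) / A))).
    assert (exp (- ((2 * V + 1) / A)) < 1).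
    { assert (0 < (2 * V + 1) / A) by (apply Rdiv_lt_0_compat; lra).
      assert (exp (- ((2 * V + 1) / A)) < exp 0) by (apply exp_increasing; lra).
      rewrite exp_0 in *; lra. }
    nra. }
  assert (Hln : ln s = ln r - (2 * V + 1) / A).
  { unfold s. rewrite ln_mult by (try apply exp_pos; lra). rewrite ln_exp. ring. }
  assert (Hh : v s - A * ln s <= v r - A * ln r).
  { apply (mvt_le (fun x => v x - A * ln x) (fun x => v1 x - A * / x)); [lra| |].
    - intros c Hc. apply dminus. apply (Hs1 c); lra.
      apply derivable_pt_lim_scal, derivable_pt_lim_ln; lra.
    - intros c Hc. specialize (Hv1 c ltac:(lra)). unfold Rdiv in Hv1. lra. }
  rewrite Hln in Hh.
  replace (A * (ln r - (2 * V + 1) / A)) with (A * ln r - (2 * V + 1)) in Hh by (field; lra).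
  assert (Hvs : Rabs (v s) <= V) by (apply Hb; lra).
  assert (Hvr : Rabs (v r) <= V) by (apply Hb; lra).
  apply Rabs_def2b in Hvs. apply Rabs_def2b in Hvr. lra.
Qed.

Lemma Q0 mu v v1 v2 : sol mu v v1 v2 -> lim0 (fun r => w r * v1 r).
Proof.
  intros Hs eps He.
  destruct (Q0_aux mu v v1 v2 Hs eps He) as [d1 [Hd1 H1]].
  destruct (Q0_aux mu _ _ _ (sol_opp n k mu v v1 v2 Hs) eps He) as [d2 [Hd2 H2]].
  exists (Rmin d1 d2). split; [apply Rmin_glb_lt; lra|].
  intros r Hr. assert (r < d1) by (apply (Rlt_le_trans _ _ _ (proj2 Hr)), Rmin_l).
  assert (r < d2) by (apply (Rlt_le_trans _ _ _ (proj2 Hr)), Rmin_r).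
  specialize (H1 r ltac:(lra)). specialize (H2 r ltac:(lra)).
  apply Rabs_def1; lra.
Qed.

Lemma P0 mu1 mu2 v v1 v2 u u1 u2 : sol mu1 v v1 v2 -> sol mu2 u u1 u2 ->
  lim0 (Pw k m v v1 u u1).
Proof.
  intros Hv Hu eps He.
  destruct (bnd0 v (proj2 (proj2 Hv))) as [dv [Hdv Hbv]].
  destruct (bnd0 u (proj2 (proj2 Hu))) as [du [Hdu Hbu]].
  set (V := Rabs (v 0) + 1). set (U := Rabs (u 0) + 1).
  assert (0 < V) by (unfold V; pose proof (Rabs_pos (v 0)); lra).
  assert (0 < U) by (unfold U; pose proof (Rabs_pos (u 0)); lra).
  destruct (Q0 mu1 v v1 v2 Hv (eps / (4 * U))) as [d1 [Hd1 H1]]. apply Rdiv_lt_0_compat; lra.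
  destruct (Q0 mu2 u u1 u2 Hu (eps / (4 * V))) as [d2 [Hd2 H2]]. apply Rdiv_lt_0_compat; lra.
  exists (Rmin (Rmin d1 d2) (Rmin dv du)). split.
  { repeat apply Rmin_glb_lt; lra. }
  intros r Hr.
  assert (Hr' : r < d1 /\ r < d2 /\ r < dv /\ r < du).
  { destruct Hr as [_ Hr]. repeat split; eapply Rlt_le_trans; try apply Hr;
    [apply (Rle_trans _ (Rmin d1 d2)); [apply Rmin_l|apply Rmin_l]
    |apply (Rle_trans _ (Rmin d1 d2)); [apply Rmin_l|apply Rmin_r]
    |apply (Rle_trans _ (Rmin dv du)); [apply Rmin_r|apply Rmin_l]
    |apply (Rle_trans _ (Rmin dv du)); [apply Rmin_r|apply Rmin_r]]. }
  destruct Hr' as [A1 [A2 [A3 A4]]].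
  specialize (H1 r ltac:(lra)). specialize (H2 r ltac:(lra)).
  specialize (Hbv r ltac:(lra)). specialize (Hbu r ltac:(lra)). fold V in Hbv. fold U in Hbu.
  unfold Pw.
  replace (w r * (v1 r * u r - v r * u1 r)) with ((w r * v1 r) * u r - v r * (w r * u1 r)) by ring.
  apply (Rle_lt_trans _ _ _ (Rabs_triang _ _)). rewrite Rabs_Ropp, (Rabs_mult (w r * v1 r)), (Rabs_mult (v r)).
  assert (Rabs (w r * v1 r) * Rabs (u r) <= eps / (4 * U) * U).
  { apply Rmult_le_compat; try apply Rabs_pos; lra. }
  assert (Rabs (v r) * Rabs (w r * u1 r) <= V * (eps / (4 * V))).
  { apply Rmult_le_compat; try apply Rabs_pos; lra. }
  replace (eps / (4 * U) * U) with (eps / 4) in * by (field; lra).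
  replace (V * (eps / (4 * V))) with (eps / 4) in * by (field; lra).
  lra.
Qed.
End SOL2.

Lemma sol_cont n k mu v v1 v2 x : sol n k mu v v1 v2 -> 0 < x <= 1 -> continuity_pt v x.
Proof.
  intros [H _] Hx. apply derivable_continuous_pt. exists (v1 x). apply (H x Hx).
Qed.

Lemma pos_sol n k m lam phi phi1 phi2 mu v v1 v2 :
  k = 1%Z \/ k = (-1)%Z -> (1 <= m)%nat -> INR n - 1 = INR m ->
  dir_eigfun n k lam phi phi1 phi2 -> sol n k mu v v1 v2 -> mu < lam -> 0 < v 0 ->
  forall r, 0 <= r <= 1 -> 0 < v r.
Proof.
  intros kk Hm1 Hnm Hd Hs Hmu Hv0.
  destruct (Rlt_dec 0 0) as [|_]; [lra|].
  assert (Hall : ~ exists x, 0 < x <= 1 /\ v x <= 0).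
  2:{ intros r Hr. destruct (Req_dec r 0) as [->|]; auto.
      destruct (Rlt_or_le 0 (v r)) as [|Hle]; auto. exfalso. apply Hall. exists r; split; auto; lra. }
  intros Hex.
  pose proof (dir_sol _ _ _ _ _ _ Hd) as Hps.
  destruct Hd as [_ [_ [_ [_ [Hphipos Hphi1]]]]].
  destruct (first_zero v 1 ltac:(lra) (fun x Hx => sol_cont n k mu v v1 v2 x Hs Hx)
              (proj2 (proj2 Hs)) Hv0 Hex) as [z [Hz [Hvz Hbel]]].
  set (P := Pw k m v v1 phi phi1).
  assert (HPd : forall c, 0 < c <= 1 -> derivable_pt_lim P c (dPw k m v v1 v2 phi phi1 phi2 c)).
  { intros c Hc. eapply P_d; eauto. }
  assert (HPo : forall c, 0 < c < z -> 0 < dPw k m v v1 v2 phi phi1 phi2 c).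
  { intros c Hc. rewrite (P_ode n k m kk Hm1 Hnm mu lam v v1 v2 phi phi1 phi2 c Hs Hps) by lra.
    assert (0 < w k m c) by (eapply w_pos; eauto; lra).
    assert (0 < v c) by (apply Hbel; lra).
    assert (0 < phi c) by (apply Hphipos; lra).
    assert (0 < lam - mu) by lra.
    repeat apply Rmult_lt_0_compat; auto. }
  assert (H1 : P (z / 2) < P z).
  { apply (mvt_lt P (dPw k m v v1 v2 phi phi1 phi2)); [lra| |].
    - intros c Hc. apply HPd; lra.
    - intros c Hc. apply HPo; lra. }
  assert (H2 : 0 <= P (z / 2)).
  { apply lim0_nonneg; [eapply P0; eauto| lra|].
    intros r Hr. apply (mvt_le P (dPw k m v v1 v2 phi phi1 phi2)); [lra| |].
    - intros c Hc. apply HPd; lra.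
    - intros c Hc. left. apply HPo; lra. }
  assert (H3 : P z <= 0).
  { unfold P, Pw. rewrite Hvz.
    assert (v1 z <= 0).
    { apply (deriv_nonpos_at_zero v (v1 z) z); try lra; auto.
      apply (proj1 Hs z Hz). }
    assert (0 <= phi z).
    { destruct (Req_dec z 1) as [->|]; [lra|]. left; apply Hphipos; lra. }
    assert (0 < w k m z) by (eapply w_pos; eauto).
    replace (v1 z * phi z - 0 * phi1 z) with (v1 z * phi z) by ring.
    assert (v1 z * phi z <= 0) by nra. nra. }
  lra.
Qed.

Lemma phi1_neg n k m lam phi phi1 phi2 :
  k = 1%Z \/ k = (-1)%Z -> (1 <= m)%nat -> INR n - 1 = INR m ->
  0 < lam -> dir_eigfun n k lam phi phi1 phi2 -> phi1 1 < 0.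
Proof.
  intros kk Hm1 Hnm Hl Hd.
  pose proof (dir_sol _ _ _ _ _ _ Hd) as Hps.
  destruct Hd as [_ [_ [_ [_ [Hphipos Hphi1]]]]].
  set (Q := fun x => w k m x * phi1 x).
  set (dQ := fun x => dw k m x * phi1 x + w k m x * phi2 x).
  assert (HQd : forall c, 0 < c <= 1 -> derivable_pt_lim Q c (dQ c)).
  { intros c Hc. eapply Q_d; eauto. }
  assert (HQo : forall c, 0 < c < 1 -> dQ c < 0).
  { intros c Hc. unfold dQ. rewrite (Q_ode n k m kk Hm1 Hnm lam phi phi1 phi2 c Hps Hc).
    assert (0 < w k m c) by (eapply w_pos; eauto; lra).
    assert (0 < phi c) by (apply Hphipos; lra).
    assert (0 < lam * w k m c * phi c) by (repeat apply Rmult_lt_0_compat; auto). lra. }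
  assert (H1 : - Q (1/4) < - Q 1).
  { apply (mvt_lt (fun x => - Q x) (fun x => - dQ x)); [lra| |].
    - intros c Hc. apply derivable_pt_lim_opp, HQd; lra.
    - intros c Hc. specialize (HQo c ltac:(lra)). lra. }
  assert (H2 : Q (1/4) <= 0).
  { apply lim0_nonpos; [eapply Q0; eauto| lra|].
    intros r Hr. assert (- Q r <= - Q (1/4)); [|lra].
    apply (mvt_le (fun x => - Q x) (fun x => - dQ x)); [lra| |].
    - intros c Hc. apply derivable_pt_lim_opp, HQd; lra.
    - intros c Hc. specialize (HQo c ltac:(lra)). lra. }
  assert (0 < w k m 1) by (eapply w_pos; eauto; lra).
  assert (w k m 1 * phi1 1 < 0) by (unfold Q in *; cbv beta in *; lra).
  destruct (Rlt_or_le (phi1 1) 0) as [|Hge]; auto.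
  assert (0 <= w k m 1 * phi1 1) by (apply Rmult_le_pos; lra). lra.
Qed.

Lemma uniq_sol n k m mu c c1 c2 u u1 u2 :
  k = 1%Z \/ k = (-1)%Z -> (1 <= m)%nat -> INR n - 1 = INR m ->
  sol n k mu c c1 c2 -> sol n k mu u u1 u2 -> (forall r, 0 < r <= 1 -> 0 < u r) ->
  forall r, 0 < r <= 1 -> c r = (c 1 / u 1) * u r.
Proof.
  intros kk Hm1 Hnm Hc Hu Hpos.
  remember (Pw k m c c1 u u1) as Rw eqn:HRw.
  assert (HRd : forall x, 0 < x <= 1 -> derivable_pt_lim Rw x (dPw k m c c1 c2 u u1 u2 x)).
  { intros x Hx. rewrite HRw. eapply P_d; eauto. }
  assert (HRo : forall x, 0 < x < 1 -> dPw k m c c1 c2 u u1 u2 x = 0).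
  { intros x Hx. rewrite (P_ode n k m kk Hm1 Hnm mu mu c c1 c2 u u1 u2 x Hc Hu Hx). ring. }
  assert (HR0 : forall x, 0 < x <= 1 -> Rw x = 0).
  { intros x Hx. apply Rle_antisym.
    - apply lim0_nonpos; [rewrite HRw; eapply P0; eauto| lra|].
      intros r Hr. assert (- Rw r <= - Rw x); [|lra].
      apply (mvt_le (fun y => - Rw y) (fun y => - dPw k m c c1 c2 u u1 u2 y)); [lra| |].
      + intros y Hy. apply derivable_pt_lim_opp, HRd; lra.
      + intros y Hy. rewrite HRo by lra. lra.
    - apply lim0_nonneg; [rewrite HRw; eapply P0; eauto| lra|].
      intros r Hr. apply (mvt_le Rw (dPw k m c c1 c2 u u1 u2)); [lra| |].
      + intros y Hy. apply HRd; lra.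
      + intros y Hy. rewrite HRo by lra. lra. }
  assert (Hg : forall x, 0 < x <= 1 -> derivable_pt_lim (fun y => c y / u y) x 0).
  { intros x Hx. pose proof (Hpos x Hx). destruct (proj1 Hc x Hx). destruct (proj1 Hu x Hx).
    apply (dpl_eq _ _ ((c1 x * u x - u1 x * c x) / (u x) ^ 2)).
    - apply ddiv; auto; lra.
    - specialize (HR0 x Hx). rewrite HRw in HR0; unfold Pw in HR0.
      assert (0 < w k m x) by (eapply w_pos; eauto).
      assert (c1 x * u x - c x * u1 x = 0).
      { apply (Rmult_eq_reg_l (w k m x)); [|lra]. rewrite HR0; ring. }
      replace (c1 x * u x - u1 x * c x) with 0 by lra. field. lra. }
  intros r Hr. pose proof (Hpos r Hr). pose proof (Hpos 1 ltac:(lra)).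
  assert (E : c r / u r = c 1 / u 1).
  { apply Rle_antisym.
    - apply (mvt_le (fun y => c y / u y) (fun _ => 0)); [lra| |].
      + intros y Hy. apply Hg; lra.
      + intros; lra.
    - assert (- (c r / u r) <= - (c 1 / u 1)); [|lra].
      apply (mvt_le (fun y => - (c y / u y)) (fun _ => - 0)); [lra| |].
      + intros y Hy. apply derivable_pt_lim_opp, Hg; lra.
      + intros; lra. }
  rewrite <- E. field. lra.
Qed.

Fixpoint acoef (n : nat) (k : Z) (mu : R) (j : nat) : R :=
  match j with
  | O => 1
  | S i => (IZR k * INR i * (INR i + INR n - 1) - mu) / ((INR i + 1) * (2 * INR i + INR n)) * acoef n k mu i
  end.

Lemma IZRk_abs k : k = 1%Z \/ k = (-1)%Z -> Rabs (IZR k) = 1.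
Proof. intros [-> | ->]; unfold Rabs; destruct Rcase_abs; simpl in *; lra. Qed.

Lemma q_bound n k mu (j : nat) : k = 1%Z \/ k = (-1)%Z -> (2 <= n)%nat ->
  INR n + 1 + 3 * Rabs mu <= INR j ->
  Rabs ((IZR k * INR j * (INR j + INR n - 1) - mu) / ((INR j + 1) * (2 * INR j + INR n))) <= 2 / 3.
Proof.
  intros kk Hn Hj.
  assert (Hn2 : 2 <= INR n) by (apply (le_INR 2) in Hn; simpl in Hn; lra).
  assert (Hj0 : 0 <= INR j) by apply pos_INR.
  pose proof (Rabs_pos mu).
  assert (Hd : 0 < (INR j + 1) * (2 * INR j + INR n)) by nra.
  unfold Rdiv. rewrite Rabs_mult, (Rabs_inv ((INR j + 1) * (2 * INR j + INR n))), (Rabs_right ((INR j + 1) * (2 * INR j + INR n))) by lra.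
  assert (Hnum : Rabs (IZR k * INR j * (INR j + INR n - 1) - mu) <= INR j * (INR j + INR n - 1) + Rabs mu).
  { apply (Rle_trans _ _ _ (Rabs_triang _ _)). rewrite Rabs_Ropp.
    rewrite !Rabs_mult, (IZRk_abs k kk), (Rabs_right (INR j)), (Rabs_right (INR j + INR n - 1)) by lra. lra. }
  apply (Rmult_le_reg_r ((INR j + 1) * (2 * INR j + INR n))); auto.
  rewrite Rmult_assoc, Rinv_l by lra. rewrite Rmult_1_r.
  apply (Rle_trans _ _ _ Hnum).
  assert (3 * Rabs mu <= INR j) by lra.
  assert (INR n + 1 <= INR j) by lra.
  nra.
Qed.

Lemma sum_term_le (f : nat -> R) (J i : nat) : (forall j, 0 <= f j) -> (i <= J)%nat -> f i <= sum_f_R0 f J.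
Proof.
  intros Hf. induction J as [|J IH]; intros Hi.
  - replace i with 0%nat by lia. simpl. lra.
  - simpl. destruct (Nat.eq_dec i (S J)) as [->|Hne]. pose proof (cond_pos_sum f J) as _.
    + assert (0 <= sum_f_R0 f J). { clear IH Hi. induction J; simpl; [apply Hf|]. pose proof (Hf (S J)). lra. } lra.
    + pose proof (Hf (S J)). specialize (IH ltac:(lia)). lra.
Qed.

Lemma acoef_bound n k mu : k = 1%Z \/ k = (-1)%Z -> (2 <= n)%nat ->
  exists M, forall j, Rabs (acoef n k mu j) <= M * (2/3) ^ j.
Proof.
  intros kk Hn.
  destruct (INR_unbounded (INR n + 1 + 3 * Rabs mu)) as [J HJ].
  set (f := fun i => Rabs (acoef n k mu i) * (3/2) ^ i).
  assert (Hf : forall i, 0 <= f i) by (intros i; unfold f; apply Rmult_le_pos; [apply Rabs_pos| apply pow_le; lra]).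
  exists (sum_f_R0 f J).
  assert (Hb : forall j, f j <= sum_f_R0 f J).
  { induction j as [|j IH].
    - apply sum_term_le; auto; lia.
    - destruct (le_lt_dec (S j) J) as [Hle|Hlt].
      + apply sum_term_le; auto.
      + apply (Rle_trans _ (f j)); auto. unfold f. simpl acoef.
        assert (HJj : INR n + 1 + 3 * Rabs mu <= INR j).
        { assert (INR J <= INR j) by (apply le_INR; lia). lra. }
        pose proof (q_bound n k mu j kk Hn HJj) as Hq.
        rewrite Rabs_mult. simpl pow.
        pose proof (Rabs_pos (acoef n k mu j)).
        assert (0 < (3/2) ^ j) by (apply pow_lt; lra).
        set (q := Rabs _) in Hq |- *.
        assert (q * Rabs (acoef n k mu j) <= 2/3 * Rabs (acoef n k mu j)) by (apply Rmult_le_compat_r; lra).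
        nra. }
  intros j. specialize (Hb j). unfold f in Hb.
  assert (E : (2/3) ^ j * (3/2) ^ j = 1).
  { rewrite <- Rpow_mult_distr. replace (2/3 * (3/2)) with 1 by field. apply pow1. }
  assert (0 < (2/3) ^ j) by (apply pow_lt; lra).
  apply (Rmult_le_compat_r ((2/3) ^ j)) in Hb; [|lra].
  rewrite Rmult_assoc, (Rmult_comm ((3/2)^j)), E, Rmult_1_r in Hb. exact Hb.
Qed.

Lemma acoef_radius n k mu : k = 1%Z \/ k = (-1)%Z -> (2 <= n)%nat ->
  Rbar_le (5/4) (CV_radius (acoef n k mu)).
Proof.
  intros kk Hn. destruct (acoef_bound n k mu kk Hn) as [M HM].
  destruct (Lub_Rbar_correct (CV_disk (acoef n k mu))) as [Hub _].
  apply Hub. unfold CV_disk.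
  apply (@ex_series_le R_AbsRing R_CompleteNormedModule _ (fun j => M * (5/6) ^ j)).
  - intros j. change (norm (Rabs (acoef n k mu j * (5 / 4) ^ j))) with (Rabs (Rabs (acoef n k mu j * (5 / 4) ^ j))).
    rewrite Rabs_Rabsolu, Rabs_mult, (Rabs_right ((5/4)^j)) by (apply Rle_ge, pow_le; lra).
    specialize (HM j). assert (0 < (5/4)^j) by (apply pow_lt; lra).
    apply (Rle_trans _ (M * (2/3)^j * (5/4)^j)); [apply Rmult_le_compat_r; lra|].
    rewrite Rmult_assoc, <- Rpow_mult_distr. replace (2/3 * (5/4)) with (5/6) by field. lra.
  - apply (ex_series_ext (fun j => scal M ((5/6) ^ j))).
    + intros j. reflexivity.
    + apply (@ex_series_scal R_AbsRing R_CompleteNormedModule M (fun j => (5/6)^j)). apply ex_series_geom. rewrite Rabs_right; lra.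
Qed.

Lemma acoef_inside n k mu y : k = 1%Z \/ k = (-1)%Z -> (2 <= n)%nat -> Rabs y <= 1 ->
  Rbar_lt (Rabs y) (CV_radius (acoef n k mu)).
Proof.
  intros kk Hn Hy. apply (Rbar_lt_le_trans _ (5/4)); [simpl; lra|]. apply acoef_radius; auto.
Qed.

Lemma acoef_S n k mu i : acoef n k mu (S i) =
  (IZR k * INR i * (INR i + INR n - 1) - mu) / ((INR i + 1) * (2 * INR i + INR n)) * acoef n k mu i.
Proof. reflexivity. Qed.

Lemma zeroR : (zero : R) = 0.
Proof. reflexivity. Qed.

Lemma coef_id n k mu j : (2 <= n)%nat ->
  2 * PS_incr_1 (PS_derive (PS_derive (acoef n k mu))) j
  - IZR k * PS_incr_1 (PS_incr_1 (PS_derive (PS_derive (acoef n k mu)))) j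
  + INR n * PS_derive (acoef n k mu) j
  - INR n * IZR k * PS_incr_1 (PS_derive (acoef n k mu)) j
  + mu * acoef n k mu j = 0.
Proof.
  intros Hn.
  assert (Hn2 : 2 <= INR n) by (apply (le_INR 2) in Hn; simpl in Hn; lra).
  destruct j as [|[|i]]; unfold PS_incr_1, PS_derive; repeat match goal with |- context [@zero ?G] => change (@zero G) with 0 end; rewrite ?acoef_S, ?acoef_S, ?acoef_S, ?S_INR, ?S_INR, ?S_INR.
  - simpl acoef. simpl INR. field. lra.
  - simpl acoef. simpl INR. field. lra.
  - set (x := INR i). assert (0 <= x) by apply pos_INR.
    field. split; lra.
Qed.

Lemma F_ode n k mu y : k = 1%Z \/ k = (-1)%Z -> (2 <= n)%nat -> Rabs y <= 1 ->
  y * (2 - IZR k * y) * PSeries (PS_derive (PS_derive (acoef n k mu))) y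
  + INR n * (1 - IZR k * y) * PSeries (PS_derive (acoef n k mu)) y
  + mu * PSeries (acoef n k mu) y = 0.
Proof.
  intros kk Hn Hy.
  set (a := acoef n k mu). set (a1 := PS_derive a). set (a2 := PS_derive a1).
  assert (Hr : Rbar_lt (Rabs y) (CV_radius a)) by (apply acoef_inside; auto).
  assert (Hr1 : Rbar_lt (Rabs y) (CV_radius a1)) by (unfold a1; rewrite CV_radius_derive; auto).
  assert (Hr2 : Rbar_lt (Rabs y) (CV_radius a2)) by (unfold a2; rewrite CV_radius_derive; auto).
  pose proof (PSeries_correct a y (CV_radius_inside a y Hr)) as H0.
  pose proof (PSeries_correct a1 y (CV_radius_inside a1 y Hr1)) as H1.
  pose proof (PSeries_correct a2 y (CV_radius_inside a2 y Hr2)) as H2.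
  set (F := PSeries a y) in *. set (F1 := PSeries a1 y) in *. set (F2 := PSeries a2 y) in *.
  assert (Hc : forall c : R, mult y c = mult c y) by (intros c; apply Rmult_comm).
  pose proof (is_pseries_scal 2 _ _ _ (Hc 2) (is_pseries_incr_1 _ _ _ H2)) as T1.
  pose proof (is_pseries_scal (- IZR k) _ _ _ (Hc _) (is_pseries_incr_1 _ _ _ (is_pseries_incr_1 _ _ _ H2))) as T2.
  pose proof (is_pseries_scal (INR n) _ _ _ (Hc _) H1) as T3.
  pose proof (is_pseries_scal (- (INR n * IZR k)) _ _ _ (Hc _) (is_pseries_incr_1 _ _ _ H1)) as T4.
  pose proof (is_pseries_scal mu _ _ _ (Hc _) H0) as T5.
  pose proof (is_pseries_plus _ _ _ _ _ (is_pseries_plus _ _ _ _ _ (is_pseries_plus _ _ _ _ _ (is_pseries_plus _ _ _ _ _ T1 T2) T3) T4) T5) as T.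
  apply (is_pseries_ext _ (fun _ => 0)) in T.
  2:{ intros j. unfold PS_plus, PS_scal. change plus with Rplus. change scal with Rmult.
      pose proof (coef_id n k mu j Hn) as E. fold a a1 a2 in E. simpl. lra. }
  apply is_pseries_unique in T. rewrite PSeries_const_0 in T.
  change plus with Rplus in T. change scal with Rmult in T. simpl in T. lra.
Qed.

Definition uF n k mu r := PSeries (acoef n k mu) (Yk k r).
Definition uF1 n k mu r := PSeries (PS_derive (acoef n k mu)) (Yk k r) * Sk k r.
Definition uF2 n k mu r := PSeries (PS_derive (PS_derive (acoef n k mu))) (Yk k r) * Sk k r ^ 2
  + PSeries (PS_derive (acoef n k mu)) (Yk k r) * Ck k r.

Lemma uF_sol n k mu : k = 1%Z \/ k = (-1)%Z -> (2 <= n)%nat ->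
  sol n k mu (uF n k mu) (uF1 n k mu) (uF2 n k mu).
Proof.
  intros kk Hn.
  set (a := acoef n k mu).
  assert (HD : forall y (b : nat -> R), Rbar_lt (Rabs y) (CV_radius b) -> derivable_pt_lim (PSeries b) y (PSeries (PS_derive b) y)).
  { intros y b Hy. apply is_derive_Reals, is_derive_PSeries; auto. }
  assert (Hin : forall r, 0 <= r <= 1 -> forall j : nat, Rbar_lt (Rabs (Yk k r)) (CV_radius (Nat.iter j PS_derive a))).
  { intros r Hr j. induction j as [|j IH].
    - apply acoef_inside; auto. apply Ybnd; auto.
    - simpl. rewrite CV_radius_derive. auto. }
  split; [|split].
  - intros r Hr. assert (Hr' : 0 <= r <= 1) by lra. split.
    + unfold uF, uF1. fold a. apply (dcomp (Yk k) (PSeries a)); [apply dY; auto|].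
      apply HD. apply (Hin r Hr' 0%nat).
    + unfold uF1, uF2. fold a. apply (dpl_eq _ _ ((PSeries (PS_derive (PS_derive a)) (Yk k r) * Sk k r) * Sk k r + PSeries (PS_derive a) (Yk k r) * Ck k r)); [|ring].
      apply (dmult (fun x => PSeries (PS_derive a) (Yk k x)) (Sk k)); [|apply dS; auto].
      apply (dcomp (Yk k) (PSeries (PS_derive a))); [apply dY; auto|].
      apply HD. apply (Hin r Hr' 1%nat).
  - intros r Hr. unfold radial_ode, uF, uF1, uF2.
    assert (HS : 0 < Sk k r) by (apply Spos; auto; lra).
    pose proof (F_ode n k mu (Yk k r) kk Hn (Ybnd k kk r ltac:(lra))) as E.
    rewrite <- (S2 k kk r), <- (CY k kk r) in E. fold a in E |- *.
    replace (PSeries (PS_derive (PS_derive a)) (Yk k r) * Sk k r ^ 2 + PSeries (PS_derive a) (Yk k r) * Ck k r +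
      (INR n - 1) * (Ck k r / Sk k r) * (PSeries (PS_derive a) (Yk k r) * Sk k r) + mu * PSeries a (Yk k r))
      with (Sk k r ^ 2 * PSeries (PS_derive (PS_derive a)) (Yk k r) + INR n * Ck k r * PSeries (PS_derive a) (Yk k r) + mu * PSeries a (Yk k r)) by (field; lra).
    lra.
  - apply cont_right0. unfold uF. fold a.
    apply (continuity_pt_comp (Yk k) (PSeries a)).
    + apply derivable_continuous_pt. exists (Sk k 0). apply dY; auto.
    + apply PSeries_continuity. apply (Hin 0 ltac:(lra) 0%nat).
Qed.

Lemma uF_0 n k mu : k = 1%Z \/ k = (-1)%Z -> uF n k mu 0 = 1.
Proof. intros kk. unfold uF. rewrite Y0 by auto. rewrite PSeries_0. reflexivity. Qed.

Lemma part1 n k m mu c c1 c2 :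
  k = 1%Z \/ k = (-1)%Z -> (1 <= m)%nat -> INR n - 1 = INR m ->
  sol n k mu c c1 c2 -> (forall r, 0 < r <= 1 -> 0 < c r) -> mu <= -4 ->
  sqrt (- mu) * w k m (1/2) * c 1 / (2 * 2 ^ m) <= c1 1.
Proof.
  intros kk Hm1 Hnm Hs Hc Hmu.
  set (nu := - mu). assert (Hnu : 4 <= nu) by (unfold nu; lra).
  set (Q := fun x => w k m x * c1 x).
  set (dQ := fun x => dw k m x * c1 x + w k m x * c2 x).
  assert (HQd : forall x, 0 < x <= 1 -> derivable_pt_lim Q x (dQ x)).
  { intros x Hx. eapply Q_d; eauto. }
  assert (HQo : forall x, 0 < x < 1 -> dQ x = nu * w k m x * c x).
  { intros x Hx. unfold dQ. rewrite (Q_ode n k m kk Hm1 Hnm mu c c1 c2 x Hs Hx). unfold nu; ring. }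
  assert (HQo' : forall x, 0 < x < 1 -> 0 <= dQ x).
  { intros x Hx. rewrite HQo by auto. assert (0 < w k m x) by (eapply w_pos; eauto; lra).
    pose proof (Hc x ltac:(lra)). left. repeat apply Rmult_lt_0_compat; lra. }
  assert (HQmono : forall s t, 0 < s <= t -> t <= 1 -> Q s <= Q t).
  { intros s t Hst Ht. apply (mvt_le Q dQ); [lra| |].
    - intros x Hx. apply HQd; lra.
    - intros x Hx. apply HQo'; lra. }
  assert (HQpos : forall x, 0 < x <= 1 -> 0 <= Q x).
  { intros x Hx. apply lim0_nonneg; [eapply Q0; eauto|lra|].
    intros r Hr. apply HQmono; lra. }
  assert (Hc1 : forall x, 0 < x <= 1 -> 0 <= c1 x).
  { intros x Hx. specialize (HQpos x Hx). unfold Q in HQpos.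
    assert (0 < w k m x) by (eapply w_pos; eauto).
    destruct (Rle_or_lt 0 (c1 x)) as [|Hlt]; auto. nra. }
  assert (Hcmono : forall s t, 0 < s <= t -> t <= 1 -> c s <= c t).
  { intros s t Hst Ht. apply (mvt_le c c1); [lra| |].
    - intros x Hx. apply (proj1 Hs x); lra.
    - intros x Hx. apply Hc1; lra. }
  assert (Hsq : 2 <= sqrt nu).
  { replace 2 with (sqrt 4). apply sqrt_le_1_alt; lra. replace 4 with (2 * 2) by ring. rewrite sqrt_square; lra. }
  set (h := / sqrt nu).
  assert (Hh : 0 < h <= 1/2).
  { unfold h. split. apply Rinv_0_lt_compat; lra.
    apply (Rmult_le_reg_l (sqrt nu)); [lra|]. rewrite Rinv_r by lra. lra. }
  assert (Hnuh : nu * h = sqrt nu).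
  { unfold h. rewrite <- (sqrt_sqrt nu) at 1 by lra. field. lra. }
  assert (Hnuh2 : nu * h * h = 1).
  { rewrite Hnuh. unfold h. field. lra. }
  remember (1 - h) as r eqn:Hrdef. remember (w k m r) as W eqn:HWdef.
  assert (HW : w k m (1/2) <= W) by (rewrite HWdef; apply w_mono; auto; lra).
  assert (HW0 : 0 < w k m (1/2)) by (eapply w_pos; eauto; lra).
  assert (Hcr : 0 < c r) by (apply Hc; lra).
  assert (HQ1 : 0 <= Q 1) by (apply HQpos; lra).
  assert (Ha : Q r + nu * W * c r * h <= Q 1).
  { assert (Q r - nu * W * c r * r <= Q 1 - nu * W * c r * 1).
    { apply (mvt_le (fun x => Q x - nu * W * c r * x) (fun x => dQ x - nu * W * c r * 1)); [lra| |].
      - intros x Hx. apply dminus. apply HQd; lra.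
        apply derivable_pt_lim_scal, derivable_pt_lim_id.
      - intros x Hx. rewrite HQo by lra.
        assert (W <= w k m x) by (rewrite HWdef; apply w_mono; auto; lra).
        assert (c r <= c x) by (apply Hcmono; lra).
        assert (0 < W) by lra.
        assert (nu * W * c r <= nu * w k m x * c x).
        { apply Rmult_le_compat; try lra. apply Rmult_le_pos; lra. apply Rmult_le_compat_l; lra. }
        lra. }
    assert (E : nu * W * c r * 1 - nu * W * c r * r = nu * W * c r * h) by (replace h with (1 - r) by lra; ring).
    lra. }
  assert (Hb : c 1 - c r <= h * Q 1 / W).
  { assert (Q 1 / W * r - c r <= Q 1 / W * 1 - c 1).
    { apply (mvt_le (fun x => Q 1 / W * x - c x) (fun x => Q 1 / W * 1 - c1 x)); [lra| |].
      - intros x Hx. apply dminus. apply derivable_pt_lim_scal, derivable_pt_lim_id.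
        apply (proj1 Hs x); lra.
      - intros x Hx.
        assert (W <= w k m x) by (rewrite HWdef; apply w_mono; auto; lra).
        assert (0 < W) by lra.
        assert (Q x <= Q 1) by (apply HQmono; lra).
        assert (0 <= Q x) by (apply HQpos; lra).
        assert (c1 x * W <= Q 1).
        { unfold Q in *. assert (0 <= c1 x) by (apply Hc1; lra). nra. }
        assert (c1 x <= Q 1 / W).
        { apply (Rmult_le_reg_r W); auto. unfold Rdiv. rewrite Rmult_assoc, Rinv_l by lra. lra. }
        lra. }
    replace (h * Q 1 / W) with (Q 1 / W * h) by (field; lra).
    assert (E : Q 1 / W * 1 - Q 1 / W * r = Q 1 / W * h) by (replace h with (1 - r) by lra; ring). lra. }
  assert (HQ1b : sqrt nu * W * c 1 <= 2 * Q 1).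
  { assert (0 < W) by lra.
    assert (E1 : nu * W * c r * h >= nu * W * h * (c 1 - h * Q 1 / W)).
    { assert (c r >= c 1 - h * Q 1 / W) by lra.
      assert (0 < nu * W * h) by (repeat apply Rmult_lt_0_compat; lra).
      replace (nu * W * c r * h) with (nu * W * h * c r) by ring. nra. }
    replace (nu * W * h * (c 1 - h * Q 1 / W)) with (sqrt nu * W * c 1 - (nu * h * h) * Q 1) in E1 by (rewrite <- Hnuh; field; lra).
    rewrite Hnuh2 in E1.
    pose proof (HQpos r ltac:(lra)). lra. }
  assert (Hw1 : 0 < w k m 1 <= 2 ^ m) by (split; [eapply w_pos; eauto; lra| eapply w_le2; eauto; lra]).
  assert (E : c1 1 = Q 1 / w k m 1) by (unfold Q; field; lra).
  rewrite E.
  assert (H2m : 0 < 2 ^ m) by (apply pow_lt; lra).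
  assert (Hc1' : 0 < c 1) by (apply Hc; lra).
  assert (sqrt nu * w k m (1/2) * c 1 <= 2 * Q 1).
  { apply (Rle_trans _ (sqrt nu * W * c 1)); auto.
    apply Rmult_le_compat_r; [lra|]. apply Rmult_le_compat_l; lra. }
  apply (Rle_trans _ (Q 1 / 2 ^ m)).
  - apply (Rmult_le_reg_r (2 * 2 ^ m)); [lra|].
    replace (sqrt nu * w k m (1 / 2) * c 1 / (2 * 2 ^ m) * (2 * 2 ^ m)) with (sqrt nu * w k m (1 / 2) * c 1) by (field; lra).
    replace (Q 1 / 2 ^ m * (2 * 2 ^ m)) with (2 * Q 1) by (field; lra). lra.
  - unfold Rdiv. apply Rmult_le_compat_l; auto. apply Rinv_le_contravar; lra.
Qed.

Lemma part2 n k m lam phi phi1 phi2 mu c c1 c2 B :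
  k = 1%Z \/ k = (-1)%Z -> (1 <= m)%nat -> INR n - 1 = INR m ->
  dir_eigfun n k lam phi phi1 phi2 -> sol n k mu c c1 c2 ->
  (forall r, 0 < r <= 1 -> 0 < c r) -> c 1 = - phi1 1 -> 0 < mu < lam -> 0 < B ->
  (forall r, 0 < r <= 1 -> phi r <= B) ->
  c1 1 <= - (mu / (B * (lam - mu))) * phi1 1 ^ 2.
Proof.
  intros kk Hm1 Hnm Hd Hs Hc Hc1 Hmu HB HphiB.
  pose proof (dir_sol _ _ _ _ _ _ Hd) as Hps.
  assert (Hphi1 : phi 1 = 0) by (destruct Hd as [_ [_ [_ [_ [_ H]]]]]; exact H).
  set (ka := mu / (B * (lam - mu))).
  assert (Hka : 0 < ka) by (unfold ka; apply Rdiv_lt_0_compat; [lra| apply Rmult_lt_0_compat; lra]).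
  set (G := fun x => w k m x * c1 x + ka * Pw k m c c1 phi phi1 x).
  set (dG := fun x => (dw k m x * c1 x + w k m x * c2 x) + ka * dPw k m c c1 c2 phi phi1 phi2 x).
  assert (HGd : forall x, 0 < x <= 1 -> derivable_pt_lim G x (dG x)).
  { intros x Hx. unfold G, dG. apply (dplus (fun y => w k m y * c1 y) (fun y => ka * Pw k m c c1 phi phi1 y)).
    - eapply Q_d; eauto.
    - apply derivable_pt_lim_scal. eapply P_d; eauto. }
  assert (HGo : forall x, 0 < x < 1 -> dG x <= 0).
  { intros x Hx. unfold dG.
    rewrite (Q_ode n k m kk Hm1 Hnm mu c c1 c2 x Hs Hx).
    rewrite (P_ode n k m kk Hm1 Hnm mu lam c c1 c2 phi phi1 phi2 x Hs Hps Hx).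
    assert (0 < w k m x) by (eapply w_pos; eauto; lra).
    pose proof (Hc x ltac:(lra)). pose proof (HphiB x ltac:(lra)).
    replace (- mu * w k m x * c x + ka * ((lam - mu) * w k m x * c x * phi x))
      with (mu / B * (w k m x * c x) * (phi x - B)) by (unfold ka; field; lra).
    assert (0 < mu / B * (w k m x * c x)) by (apply Rmult_lt_0_compat; [apply Rdiv_lt_0_compat; lra| apply Rmult_lt_0_compat; lra]).
    nra. }
  assert (HG1 : G 1 <= 0).
  { apply lim0_nonpos; [| lra |].
    - unfold G. apply lim0_comb; [eapply Q0; eauto| eapply P0; eauto].
    - intros r Hr. assert (- G r <= - G 1); [|lra].
      apply (mvt_le (fun x => - G x) (fun x => - dG x)); [lra| |].
      + intros x Hx. apply derivable_pt_lim_opp, HGd; lra.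
      + intros x Hx. specialize (HGo x ltac:(lra)). lra. }
  unfold G, Pw in HG1. rewrite Hphi1, Hc1 in HG1.
  assert (Hw1 : 0 < w k m 1) by (eapply w_pos; eauto; lra).
  assert (w k m 1 * (c1 1 + ka * phi1 1 ^ 2) <= 0) by (simpl in *; nra).
  assert (c1 1 + ka * phi1 1 ^ 2 <= 0).
  { destruct (Rle_or_lt (c1 1 + ka * phi1 1 ^ 2) 0) as [|Hlt]; auto. nra. }
  lra.
Qed.

Lemma main_aux n m k lam phi phi1 phi2 T :
  k = 1%Z \/ k = (-1)%Z -> (1 <= m)%nat -> INR n - 1 = INR m -> (2 <= n)%nat ->
  dir_eigfun n k lam phi phi1 phi2 -> phi1 1 < 0 -> lam - (2 * PI / T) ^ 2 < lam ->
  (exists c c1 c2, c_sol n k lam phi1 T c c1 c2) /\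
  (forall c c1 c2, c_sol n k lam phi1 T c c1 c2 ->
     sol n k (lam - (2 * PI / T) ^ 2) c c1 c2 /\ c 1 = - phi1 1 /\ forall r, 0 < r <= 1 -> 0 < c r).
Proof.
  intros kk Hm1 Hnm Hn Hd Hg Hmu.
  set (mu := lam - (2 * PI / T) ^ 2) in *.
  pose proof (uF_sol n k mu kk Hn) as Hu.
  assert (Hupos : forall r, 0 <= r <= 1 -> 0 < uF n k mu r).
  { apply (pos_sol n k m lam phi phi1 phi2 mu _ (uF1 n k mu) (uF2 n k mu)); auto.
    rewrite uF_0 by auto; lra. }
  pose proof (Hupos 1 ltac:(lra)) as Hu1.
  split.
  - set (al := - phi1 1 / uF n k mu 1).
    destruct (sol_scal n k mu _ _ _ al Hu) as [A1 [A2 A3]].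
    exists (fun x => al * uF n k mu x), (fun x => al * uF1 n k mu x), (fun x => al * uF2 n k mu x).
    split; [exact A1|]. split; [exact A2|]. split; [exact A3|].
    cbv beta. unfold al. field. lra.
  - intros c c1 c2 [A1 [A2 [A3 A4]]].
    assert (Hs : sol n k mu c c1 c2) by (split; [|split]; auto).
    split; auto. split; auto.
    intros r Hr. rewrite (uniq_sol n k m mu c c1 c2 _ _ _ kk Hm1 Hnm Hs Hu) by (auto; intros; apply Hupos; lra).
    rewrite A4. apply Rmult_lt_0_compat; [apply Rdiv_lt_0_compat; lra| apply Hupos; lra].
Qed.

Lemma sq_lt a b : 0 < a -> a < b -> a * a < b * b.
Proof. intros. nra. Qed.

Theorem proposition7p1 (n : nat) (k : Z) (lam : R) (phi phi1 phi2 : R -> R) :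
  (2 <= n)%nat ->
  (k = 1%Z \/ k = (-1)%Z) ->
  first_dir_eig n k lam ->
  dir_eigfun n k lam phi phi1 phi2 ->
  L2_normalized n k phi ->
  (forall M, exists d, 0 < d /\ forall T, 0 < T < d ->
     (exists c c1 c2, c_sol n k lam phi1 T c c1 c2) /\
     (forall c c1 c2, c_sol n k lam phi1 T c c1 c2 -> c1 1 + phi2 1 > M)) /\
  (forall M, exists N, forall T, N < T ->
     (exists c c1 c2, c_sol n k lam phi1 T c c1 c2) /\
     (forall c c1 c2, c_sol n k lam phi1 T c c1 c2 -> c1 1 + phi2 1 < M)).
Proof.
  intros Hn kk [Hlam _] Hd _.
  set (m := pred n).
  assert (Hm1 : (1 <= m)%nat) by (unfold m; lia).
  assert (Hnm : INR n - 1 = INR m).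
  { unfold m. destruct n as [|n']; [lia|]. rewrite S_INR. simpl pred. ring. }
  assert (Hg : phi1 1 < 0) by (apply (phi1_neg n k m lam phi phi1 phi2); auto).
  set (ga := - phi1 1). assert (Hga : 0 < ga) by (unfold ga; lra).
  assert (HPI : 0 < PI) by apply PI_RGT_0.
  split.
  - intros M.
    set (Mt := Rabs M + Rabs (phi2 1) + 1).
    assert (HMt : 0 < Mt) by (unfold Mt; pose proof (Rabs_pos M); pose proof (Rabs_pos (phi2 1)); lra).
    set (w0 := w k m (1/2)).
    assert (Hw0 : 0 < w0) by (unfold w0; eapply w_pos; eauto; lra).
    assert (H2m : 0 < 2 ^ m) by (apply pow_lt; lra).
    set (Kc := w0 * ga / (2 * 2 ^ m)).
    assert (HKc : 0 < Kc) by (unfold Kc; apply Rdiv_lt_0_compat; [apply Rmult_lt_0_compat|]; lra).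
    set (A := Rmax 4 ((Mt / Kc) * (Mt / Kc))).
    assert (HA4 : 4 <= A) by apply Rmax_l.
    assert (HA2 : (Mt / Kc) * (Mt / Kc) <= A) by apply Rmax_r.
    set (s := sqrt (A + lam)).
    assert (Hs : 0 < s) by (apply sqrt_lt_R0; lra).
    assert (Hss : s * s = A + lam) by (apply sqrt_sqrt; lra).
    exists (2 * PI / s). split; [apply Rdiv_lt_0_compat; lra|].
    intros T HT.
    assert (Hsl : s < 2 * PI / T).
    { apply (Rmult_lt_reg_r T); [lra|]. unfold Rdiv. rewrite Rmult_assoc, Rinv_l by lra.
      destruct HT as [HT0 HT1]. apply (Rmult_lt_compat_l s) in HT1; auto.
      replace (s * (2 * PI / s)) with (2 * PI) in HT1 by (field; lra). lra. }
    assert (Hsq : A + lam < (2 * PI / T) ^ 2) by (rewrite <- Hss; simpl; rewrite Rmult_1_r; apply sq_lt; auto).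
    destruct (main_aux n m k lam phi phi1 phi2 T kk Hm1 Hnm Hn Hd Hg ltac:(lra)) as [Hex Hall].
    split; auto.
    intros c c1 c2 Hcs. destruct (Hall c c1 c2 Hcs) as [Hs' [Hc1 Hpos]].
    assert (Hmu : lam - (2 * PI / T) ^ 2 <= -4) by lra.
    pose proof (part1 n k m _ c c1 c2 kk Hm1 Hnm Hs' Hpos Hmu) as P1.
    replace (- (lam - (2 * PI / T) ^ 2)) with ((2 * PI / T) ^ 2 - lam) in P1 by ring.
    rewrite Hc1 in P1. fold ga w0 in P1.
    assert (Hsqrt : Mt / Kc <= sqrt ((2 * PI / T) ^ 2 - lam)).
    { rewrite <- (sqrt_square (Mt / Kc)) by (left; apply Rdiv_lt_0_compat; lra).
      apply sqrt_le_1_alt. lra. }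
    assert (E : sqrt ((2 * PI / T) ^ 2 - lam) * w0 * ga / (2 * 2 ^ m) = sqrt ((2 * PI / T) ^ 2 - lam) * Kc)
      by (unfold Kc; field; lra).
    rewrite E in P1.
    assert (Mt <= sqrt ((2 * PI / T) ^ 2 - lam) * Kc).
    { apply (Rmult_le_compat_r Kc) in Hsqrt; [|lra]. replace (Mt / Kc * Kc) with Mt in Hsqrt by (field; lra). lra. }
    unfold Mt in *. pose proof (Rle_abs M). pose proof (Rle_abs (- phi2 1)). rewrite Rabs_Ropp in *. lra.
  - intros M.
    set (Mt := Rabs M + Rabs (phi2 1) + 1).
    assert (HMt : 0 < Mt) by (unfold Mt; pose proof (Rabs_pos M); pose proof (Rabs_pos (phi2 1)); lra).
    pose proof Hd as [Hd1 [Hd2 [Hd3 [[B0 HB0] Hd5]]]].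
    set (B := Rmax B0 1).
    assert (HB : 0 < B) by (unfold B; pose proof (Rmax_r B0 1); lra).
    assert (HphiB : forall r, 0 < r <= 1 -> phi r <= B).
    { intros r Hr. pose proof (HB0 r Hr). pose proof (Rle_abs (phi r)). pose proof (Rmax_l B0 1). unfold B. lra. }
    set (e0 := Rmin (lam / 2) (lam * ga ^ 2 / (2 * B * Mt))).
    assert (He0 : 0 < e0).
    { unfold e0. apply Rmin_glb_lt; [lra|]. apply Rdiv_lt_0_compat.
      apply Rmult_lt_0_compat; [lra| apply pow_lt; lra]. repeat apply Rmult_lt_0_compat; lra. }
    set (s := sqrt e0). assert (Hs : 0 < s) by (apply sqrt_lt_R0; lra).
    assert (Hss : s * s = e0) by (apply sqrt_sqrt; lra).
    exists (2 * PI / s). intros T HT.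
    assert (HN : 0 < 2 * PI / s) by (apply Rdiv_lt_0_compat; lra).
    assert (HT0 : 0 < T) by lra.
    assert (Hsl : 2 * PI / T < s).
    { apply (Rmult_lt_reg_r T); [lra|]. unfold Rdiv. rewrite Rmult_assoc, Rinv_l by lra.
      apply (Rmult_lt_compat_l s) in HT; auto.
      replace (s * (2 * PI / s)) with (2 * PI) in HT by (field; lra). lra. }
    set (ep := (2 * PI / T) ^ 2).
    assert (Hep0 : 0 < ep) by (unfold ep; apply pow_lt, Rdiv_lt_0_compat; lra).
    assert (Hep : ep < e0) by (unfold ep; rewrite <- Hss; simpl; rewrite Rmult_1_r; apply sq_lt; auto; apply Rdiv_lt_0_compat; lra).
    assert (Hep1 : ep < lam / 2) by (pose proof (Rmin_l (lam / 2) (lam * ga ^ 2 / (2 * B * Mt))); fold e0 in H; lra).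
    assert (Hep2 : ep < lam * ga ^ 2 / (2 * B * Mt)) by (pose proof (Rmin_r (lam / 2) (lam * ga ^ 2 / (2 * B * Mt))); fold e0 in H; lra).
    destruct (main_aux n m k lam phi phi1 phi2 T kk Hm1 Hnm Hn Hd Hg ltac:(fold ep; lra)) as [Hex Hall].
    split; auto.
    intros c c1 c2 Hcs. destruct (Hall c c1 c2 Hcs) as [Hs' [Hc1 Hpos]].
    fold ep in Hs'.
    pose proof (part2 n k m lam phi phi1 phi2 (lam - ep) c c1 c2 B kk Hm1 Hnm Hd Hs' Hpos Hc1 ltac:(lra) HB HphiB) as P2.
    replace (lam - (lam - ep)) with ep in P2 by ring.
    replace (phi1 1 ^ 2) with (ga ^ 2) in P2 by (unfold ga; ring).
    assert (Hga2 : 0 < ga ^ 2) by (apply pow_lt; lra).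
    assert (Hbig : Mt < lam * ga ^ 2 / (2 * B * ep)).
    { apply (Rmult_lt_reg_r ep); auto.
      replace (lam * ga ^ 2 / (2 * B * ep) * ep) with (lam * ga ^ 2 / (2 * B)) by (field; lra).
      apply (Rmult_lt_compat_l Mt) in Hep2; auto.
      replace (Mt * (lam * ga ^ 2 / (2 * B * Mt))) with (lam * ga ^ 2 / (2 * B)) in Hep2 by (field; lra).
      lra. }
    assert (Hcmp : lam * ga ^ 2 / (2 * B * ep) <= (lam - ep) / (B * ep) * ga ^ 2).
    { replace (lam * ga ^ 2 / (2 * B * ep)) with ((lam / 2) / (B * ep) * ga ^ 2) by (field; lra).
      apply Rmult_le_compat_r; [lra|]. unfold Rdiv. apply Rmult_le_compat_r; [|lra].
      left. apply Rinv_0_lt_compat, Rmult_lt_0_compat; lra. }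
    unfold Mt in *. pose proof (Rle_abs (- M)). pose proof (Rle_abs (phi2 1)). rewrite Rabs_Ropp in *. lra.
Qed.
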